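(* Let $G$ be a group with identity $1_G$ and let $\mathcal{B}_1,\mathcal{B}_2:G\to G$ be arbitrary maps. Let $a\circ b=\mathcal{B}_1(a)b\mathcal{B}_2(a)$, and for $a\in G$ define inner automorphisms $\lambda_a,\mu_a$ of $G$ by $\lambda_a(b)=\mathcal{B}_2(a)^{-1}b\mathcal{B}_2(a)$ and $\mu_a(b)=\mathcal{B}_1(a)b\mathcal{B}_1(a)^{-1}$. The following are equivalent: (i) $\circ$ is associative (and then $(G,\cdot,\circ,\Phi)$ is a skew truss with $\Phi(a)=\mathcal{B}_1(a)\mathcal{B}_2(a)$); (ii) $\lambda_a\lambda_b=\lambda_{a\circ b}$ and $(a\circ b)\circ 1_G=a\circ(b\circ 1_G)$ for all $a,b\in G$; (iii) $\mu_a\mu_b=\mu_{a\circ b}$ and $(a\circ b)\circ 1_G=a\circ(b\circ 1_G)$ for all $a,b\in G$.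
   Context: A skew (left) truss is a quadruple $(G,\cdot,\circ,\Phi)$ where $(G,\cdot)$ is a group, $\circ$ is an associative binary operation on $G$, and $\Phi:G\to G$ is a map with $a\circ(b\cdot c)=(a\circ b)\cdot\Phi(a)^{-1}\cdot(a\circ c)$ for all $a,b,c\in G$. *)

(* Defs.v *)
Definition is_group {G : Type} (mul : G -> G -> G) (inv : G -> G) (e : G) : Prop :=
  (forall a b c, mul a (mul b c) = mul (mul a b) c) /\
  (forall a, mul e a = a) /\ (forall a, mul a e = a) /\
  (forall a, mul (inv a) a = e) /\ (forall a, mul a (inv a) = e).

Definition associative_op {G : Type} (op : G -> G -> G) : Prop :=
  forall a b c, op a (op b c) = op (op a b) c.

Definition is_skew_truss {G : Type} (mul : G -> G -> G) (inv : G -> G)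
  (circ : G -> G -> G) (Phi : G -> G) : Prop :=
  associative_op circ /\
  forall a b c, circ a (mul b c) = mul (mul (circ a b) (inv (Phi a))) (circ a c).

Definition circB {G : Type} (mul : G -> G -> G) (B1 B2 : G -> G) (a b : G) : G :=
  mul (mul (B1 a) b) (B2 a).

Definition lambdaB {G : Type} (mul : G -> G -> G) (inv : G -> G) (B2 : G -> G) (a b : G) : G :=
  mul (mul (inv (B2 a)) b) (B2 a).

Definition muB {G : Type} (mul : G -> G -> G) (inv : G -> G) (B1 : G -> G) (a b : G) : G :=
  mul (mul (B1 a) b) (inv (B1 a)).

(* Main.v *)
Require Import Defs.

Lemma g_assoc {G} (mul : G -> G -> G) inv e (HG : is_group mul inv e) a b c :
  mul (mul a b) c = mul a (mul b c).
Proof. destruct HG as [H _]. now rewrite H. Qed.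
Lemma g_idl {G} (mul : G -> G -> G) inv e (HG : is_group mul inv e) a : mul e a = a.
Proof. apply HG. Qed.
Lemma g_idr {G} (mul : G -> G -> G) inv e (HG : is_group mul inv e) a : mul a e = a.
Proof. apply HG. Qed.
Lemma g_c1 {G} (mul : G -> G -> G) inv e (HG : is_group mul inv e) a b :
  mul (inv a) (mul a b) = b.
Proof. destruct HG as (A&B&C&D&E). now rewrite A, D, B. Qed.
Lemma g_c2 {G} (mul : G -> G -> G) inv e (HG : is_group mul inv e) a b :
  mul a (mul (inv a) b) = b.
Proof. destruct HG as (A&B&C&D&E). now rewrite A, E, B. Qed.
Lemma g_c3 {G} (mul : G -> G -> G) inv e (HG : is_group mul inv e) a :
  mul (inv a) a = e.
Proof. apply HG. Qed.
Lemma g_c4 {G} (mul : G -> G -> G) inv e (HG : is_group mul inv e) a :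
  mul a (inv a) = e.
Proof. apply HG. Qed.
Lemma g_linj {G} (mul : G -> G -> G) inv e (HG : is_group mul inv e) a x y :
  mul a x = mul a y -> x = y.
Proof. intro H. rewrite <- (g_c1 _ _ _ HG a x), H. apply (g_c1 _ _ _ HG). Qed.
Lemma g_rinj {G} (mul : G -> G -> G) inv e (HG : is_group mul inv e) a x y :
  mul x a = mul y a -> x = y.
Proof. intro H. rewrite <- (g_idr _ _ _ HG x), <- (g_idr _ _ _ HG y), <- (g_c4 _ _ _ HG a),
  <- !(g_assoc _ _ _ HG), H. reflexivity. Qed.
Lemma g_invmul {G} (mul : G -> G -> G) inv e (HG : is_group mul inv e) a b :
  inv (mul a b) = mul (inv b) (inv a).
Proof. apply (g_linj _ _ _ HG (mul a b)). rewrite (g_c4 _ _ _ HG), (g_assoc _ _ _ HG),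
  (g_c2 _ _ _ HG), (g_c4 _ _ _ HG). reflexivity. Qed.

Ltac gn HG := repeat (rewrite ?(g_assoc _ _ _ HG), ?(g_idl _ _ _ HG), ?(g_idr _ _ _ HG),
  ?(g_c1 _ _ _ HG), ?(g_c2 _ _ _ HG), ?(g_c3 _ _ _ HG), ?(g_c4 _ _ _ HG), ?(g_invmul _ _ _ HG)).
Ltac gnH HG H := repeat (rewrite ?(g_assoc _ _ _ HG), ?(g_idl _ _ _ HG), ?(g_idr _ _ _ HG),
  ?(g_c1 _ _ _ HG), ?(g_c2 _ _ _ HG), ?(g_c3 _ _ _ HG), ?(g_c4 _ _ _ HG), ?(g_invmul _ _ _ HG) in H).

Theorem theorem3p4 (G : Type) (mul : G -> G -> G) (inv : G -> G) (e : G)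
  (HG : is_group mul inv e) (B1 B2 : G -> G) :
  let circ := circB mul B1 B2 in
  let lam := lambdaB mul inv B2 in
  let mu := muB mul inv B1 in
  (associative_op circ -> is_skew_truss mul inv circ (fun a => mul (B1 a) (B2 a))) /\
  (associative_op circ <->
     (forall a b, (forall x, lam a (lam b x) = lam (circ a b) x) /\
                  circ (circ a b) e = circ a (circ b e))) /\
  (associative_op circ <->
     (forall a b, (forall x, mu a (mu b x) = mu (circ a b) x) /\
                  circ (circ a b) e = circ a (circ b e))).
Proof.
  intros circ lam mu.
  unfold circ, lam, mu, associative_op, circB, lambdaB, muB in *.
  split; [|split; split].
  - intro H; split; [exact H|]. intros a b c. gn HG. reflexivity.
  - intros H a b. specialize (H a b).
    set (ab := mul (mul (B1 a) b) (B2 a)) in *.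
    assert (H0 := H e). gnH HG H0.
    split; [|gn HG; symmetry; exact H0].
    intro x. specialize (H x). gnH HG H.
    assert (Hp : B1 ab = mul (B1 a) (mul (B1 b) (mul (B2 b) (mul (B2 a) (inv (B2 ab)))))).
    { apply (g_rinj _ _ _ HG (B2 ab)). gn HG. symmetry; exact H0. }
    rewrite Hp in H. gnH HG H. apply (g_linj _ _ _ HG) in H. apply (g_linj _ _ _ HG) in H.
    gn HG. apply (g_linj _ _ _ HG (mul (B2 b) (B2 a))). gn HG. exact H.
  - intros H a b c. destruct (H a b) as [Hl H0].
    set (ab := mul (mul (B1 a) b) (B2 a)) in *.
    gnH HG H0. specialize (Hl c). gnH HG Hl.
    assert (Hp : B1 ab = mul (B1 a) (mul (B1 b) (mul (B2 b) (mul (B2 a) (inv (B2 ab)))))).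
    { apply (g_rinj _ _ _ HG (B2 ab)). gn HG. exact H0. }
    gn HG. rewrite Hp. gn HG. apply (f_equal (mul (B1 a))), (f_equal (mul (B1 b))).
    apply (g_linj _ _ _ HG (inv (mul (B2 b) (B2 a)))). gn HG. exact Hl.
  - intros H a b. specialize (H a b).
    set (ab := mul (mul (B1 a) b) (B2 a)) in *.
    assert (H0 := H e). gnH HG H0.
    split; [|gn HG; symmetry; exact H0].
    intro x. specialize (H x). gnH HG H.
    assert (Hq : B2 ab = mul (inv (B1 ab)) (mul (B1 a) (mul (B1 b) (mul (B2 b) (B2 a))))).
    { apply (g_linj _ _ _ HG (B1 ab)). gn HG. symmetry; exact H0. }
    rewrite Hq in H. gnH HG H.
    gn HG. apply (g_rinj _ _ _ HG (mul (B1 a) (B1 b))). gn HG.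
    apply (g_rinj _ _ _ HG (mul (B2 b) (B2 a))). gn HG. exact H.
  - intros H a b c. destruct (H a b) as [Hl H0].
    set (ab := mul (mul (B1 a) b) (B2 a)) in *.
    gnH HG H0. specialize (Hl c). gnH HG Hl.
    assert (Hq : B2 ab = mul (inv (B1 ab)) (mul (B1 a) (mul (B1 b) (mul (B2 b) (B2 a))))).
    { apply (g_linj _ _ _ HG (B1 ab)). gn HG. exact H0. }
    gn HG. rewrite Hq. gn HG.
    apply (g_rinj _ _ _ HG (inv (mul (B2 b) (B2 a)))). gn HG.
    apply (g_rinj _ _ _ HG (inv (mul (B1 a) (B1 b)))). gn HG. exact Hl.
Qed.
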